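(* Let $H$ be a complex Hilbert space and $\{\mathcal{U}(t,s)\}_{t,s\in\mathbb{R}}$ a strongly continuous family of bounded linear operators on $H$ with $\mathcal{U}(t,t)=1$ and $\mathcal{U}(r,s)\mathcal{U}(t,r)=\mathcal{U}(t,s)$ for all $r,s,t\in\mathbb{R}$. For $t\in\mathbb{R}$ let $\mathcal{L}(t)x:=\lim_{h\to0}\frac1h[\mathcal{U}(t+h,t)x-x]$ on $D(\mathcal{L}(t)):=\{x:\text{the limit exists in }H\}$, and $D_\mathcal{L}:=\bigcap_{t}D(\mathcal{L}(t))$. Fix $t_0\in\mathbb{R}$ and $z\in D_\mathcal{L}$ with $z\neq0$ such that $t\mapsto\mathcal{U}(t,t_0)\mathcal{L}(t)z$ is continuous. Define $(x,y)_t:=(\mathcal{U}(t,t_0)x,\mathcal{U}(t,t_0)y)$, $\mathcal{P}(t):=(\cdot,z)_t(z,z)_t^{-1}z$, $\mathcal{Q}(t):=1-\mathcal{P}(t)$. For each $t$, let $K(t,\cdot)$ be the unique continuous solution of $$K(t,s)=-(\mathcal{U}(t,s)\mathcal{Q}(t)\mathcal{L}(t)z,\mathcal{Q}(s)\mathcal{L}(s)z)_s(z,z)_s^{-1}+\int_s^tK(t,r)\,(\mathcal{U}(r,s)z,\mathcal{Q}(s)\mathcal{L}(s)z)_s(z,z)_s^{-1}\,dr,$$ and let $\eta_{ts}:=\mathcal{U}(t,s)\mathcal{Q}(t)\mathcal{L}(t)z-\int_s^tK(t,r)\,\mathcal{U}(r,s)z\,dr$. Then for all $t,s\in\mathbb{R}$,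 $(\eta_{ts},z)_s=0$ and $K(t,s)=-(\eta_{tt_0},\eta_{st_0})(z,z)_s^{-1}$.
   Context: The scalar product $(\cdot,\cdot)$ on $H$ is conjugate-linear in its second argument. Vector-valued integrals are Bochner integrals. *)

(* Defs.v *)
From Stdlib Require Import Reals.
From Coquelicot Require Import Coquelicot.



(* A complex Hilbert space: a complete real normed module H (Coquelicot),
   equipped with a complex scalar multiplication extending the real one and an
   inner product, linear in the first and conjugate-linear in the second
   argument, which induces the norm of H. *)
Definition is_complex_hilbert {H : CompleteNormedModule R_AbsRing}
  (cscal : C -> H -> H) (inner : H -> H -> C) : Prop :=
  (forall (r : R) (x : H), cscal (RtoC r) x = scal r x) /\
  (forall x : H, cscal (RtoC 1) x = x) /\
  (forall (a b : C) (x : H), cscal a (cscal b x) = cscal (Cmult a b) x) /\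
  (forall (a b : C) (x : H), cscal (Cplus a b) x = plus (cscal a x) (cscal b x)) /\
  (forall (a : C) (x y : H), cscal a (plus x y) = plus (cscal a x) (cscal a y)) /\
  (forall x y w : H, inner (plus x y) w = Cplus (inner x w) (inner y w)) /\
  (forall (a : C) (x y : H), inner (cscal a x) y = Cmult a (inner x y)) /\
  (forall x y : H, inner y x = Cconj (inner x y)) /\
  (forall x : H, x <> zero -> (0 < Re (inner x x))%R) /\
  (forall x : H, norm x = sqrt (Re (inner x x))).

Definition is_bounded_linear {H : CompleteNormedModule R_AbsRing}
  (cscal : C -> H -> H) (A : H -> H) : Prop :=
  (forall x y : H, A (plus x y) = plus (A x) (A y)) /\
  (forall (a : C) (x : H), A (cscal a x) = cscal a (A x)) /\
  (exists M : R, forall x : H, (norm (A x) <= M * norm x)%R).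

Definition is_propagator {H : CompleteNormedModule R_AbsRing}
  (cscal : C -> H -> H) (U : R -> R -> H -> H) : Prop :=
  (forall t s : R, is_bounded_linear cscal (U t s)) /\
  (forall x : H, forall p : R * R,
      continuous (fun q : R * R => U (fst q) (snd q) x) p) /\
  (forall (t : R) (x : H), U t t x = x) /\
  (forall (r s t : R) (x : H), U r s (U t r x) = U t s x).

(* is_gen U t x y  <->  x \in D(L(t)) and L(t) x = y, i.e.
   (1/h) [U(t+h,t) x - x] --> y as h --> 0, h <> 0. *)
Definition is_gen {H : CompleteNormedModule R_AbsRing}
  (U : R -> R -> H -> H) (t : R) (x y : H) : Prop :=
  filterlim (fun h : R => scal (/ h) (minus (U (t + h) t x) x))
            (locally' 0%R) (locally y).

Definition ipt {H : CompleteNormedModule R_AbsRing} (inner : H -> H -> C)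
  (U : R -> R -> H -> H) (t0 t : R) (x y : H) : C :=
  inner (U t t0 x) (U t t0 y).

Definition Pt {H : CompleteNormedModule R_AbsRing} (cscal : C -> H -> H)
  (inner : H -> H -> C) (U : R -> R -> H -> H) (t0 : R) (z : H) (t : R)
  (x : H) : H :=
  cscal (Cdiv (ipt inner U t0 t x z) (ipt inner U t0 t z z)) z.

Definition Qt {H : CompleteNormedModule R_AbsRing} (cscal : C -> H -> H)
  (inner : H -> H -> C) (U : R -> R -> H -> H) (t0 : R) (z : H) (t : R)
  (x : H) : H :=
  minus x (Pt cscal inner U t0 z t x).

(* Main.v *)
Require Import Defs.
From Stdlib Require Import Reals.
From Coquelicot Require Import Coquelicot.
From Stdlib Require Import Lra FunctionalExtensionality Classical_Prop.

Lemma Ceq (a b : C) : Re a = Re b -> Im a = Im b -> a = b.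
Proof. destruct a, b; simpl; intros -> ->; reflexivity. Qed.

Ltac csimpl := unfold Cdiv, Cminus, Cmult, Cplus, Copp, Cinv, Cconj, RtoC, Ci, Re, Im in *; simpl in *.
Ltac Cring := apply Ceq; csimpl; ring.

Definition hilb {H : NormedModule R_AbsRing}
  (cscal : C -> H -> H) (inner : H -> H -> C) : Prop :=
  (forall (r : R) (x : H), cscal (RtoC r) x = scal r x) /\
  (forall x : H, cscal (RtoC 1) x = x) /\
  (forall (a b : C) (x : H), cscal a (cscal b x) = cscal (Cmult a b) x) /\
  (forall (a b : C) (x : H), cscal (Cplus a b) x = plus (cscal a x) (cscal b x)) /\
  (forall (a : C) (x y : H), cscal a (plus x y) = plus (cscal a x) (cscal a y)) /\
  (forall x y w : H, inner (plus x y) w = Cplus (inner x w) (inner y w)) /\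
  (forall (a : C) (x y : H), inner (cscal a x) y = Cmult a (inner x y)) /\
  (forall x y : H, inner y x = Cconj (inner x y)) /\
  (forall x : H, x <> zero -> (0 < Re (inner x x))%R) /\
  (forall x : H, norm x = sqrt (Re (inner x x))).

Lemma to_hilb {H : CompleteNormedModule R_AbsRing} cscal inner :
  is_complex_hilbert (H:=H) cscal inner -> hilb (H:=CompleteNormedModule.NormedModule _ H) cscal inner.
Proof. intro h; exact h. Qed.

Lemma C_self_zero (x : C) : x = Cplus x x -> x = RtoC 0.
Proof. destruct x as [p q]; intros E; injection E; intros; apply Ceq; simpl; lra. Qed.

Lemma C_add_zero (a b : C) : Cplus a b = RtoC 0 -> b = Copp a.
Proof. destruct a, b; intros E; injection E; intros; apply Ceq; csimpl; lra. Qed.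

Section Alg.
Context {V : NormedModule R_AbsRing} (cscal : C -> V -> V) (inner : V -> V -> C) (Hh : hilb cscal inner).

Lemma popr (x : V) : plus x (opp x) = zero. Proof. apply (plus_opp_r (G:=NormedModule.AbelianGroup _ V)). Qed.
Lemma sopo (x : V) : scal (-1) x = opp x.
Proof. rewrite <- (scal_opp_one (V:=NormedModule.ModuleSpace _ V)). f_equal. Qed.
Lemma cR r x : cscal (RtoC r) x = scal r x. Proof. apply Hh. Qed.
Lemma c1 x : cscal (RtoC 1) x = x. Proof. apply Hh. Qed.
Lemma cM a b x : cscal a (cscal b x) = cscal (Cmult a b) x. Proof. apply Hh. Qed.
Lemma cD a b x : cscal (Cplus a b) x = plus (cscal a x) (cscal b x). Proof. apply Hh. Qed.
Lemma cP a x y : cscal a (plus x y) = plus (cscal a x) (cscal a y). Proof. apply Hh. Qed.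
Lemma iP x y w : inner (plus x y) w = Cplus (inner x w) (inner y w). Proof. apply Hh. Qed.
Lemma iS a x y : inner (cscal a x) y = Cmult a (inner x y). Proof. apply Hh. Qed.
Lemma iC x y : inner y x = Cconj (inner x y). Proof. apply Hh. Qed.
Lemma ipos x : x <> zero -> 0 < Re (inner x x). Proof. apply Hh. Qed.
Lemma inorm x : norm x = sqrt (Re (inner x x)). Proof. apply Hh. Qed.

Lemma iPr w x y : inner w (plus x y) = Cplus (inner w x) (inner w y).
Proof. rewrite (iC (plus x y) w), iP, (iC x w), (iC y w). Cring. Qed.
Lemma iSr a x y : inner x (cscal a y) = Cmult (Cconj a) (inner x y).
Proof. rewrite (iC (cscal a y) x), iS, (iC y x). Cring. Qed.
Lemma i0l y : inner zero y = RtoC 0.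
Proof. apply C_self_zero. rewrite <- iP, plus_zero_r; reflexivity. Qed.
Lemma i0r y : inner y zero = RtoC 0.
Proof. rewrite iC, i0l. Cring. Qed.
Lemma iOl x y : inner (opp x) y = Copp (inner x y).
Proof. apply C_add_zero. rewrite <- iP, popr. apply i0l. Qed.
Lemma iOr x y : inner y (opp x) = Copp (inner y x).
Proof. rewrite iC, iOl, (iC x y). Cring. Qed.
Lemma iMl x y w : inner (minus x y) w = Cminus (inner x w) (inner y w).
Proof. unfold minus. rewrite iP, iOl. Cring. Qed.
Lemma iMr w x y : inner w (minus x y) = Cminus (inner w x) (inner w y).
Proof. unfold minus. rewrite iPr, iOr. Cring. Qed.
Lemma iscal_l r x y : inner (scal r x) y = Cmult (RtoC r) (inner x y).
Proof. rewrite <- cR, iS. reflexivity. Qed.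
Lemma iscal_r r x y : inner x (scal r y) = Cmult (RtoC r) (inner x y).
Proof. rewrite <- cR, iSr. Cring. Qed.
Lemma iIm x : Im (inner x x) = 0.
Proof. assert (E := iC x x). destruct (inner x x) as [p q]. injection E. csimpl. lra. Qed.
Lemma iRe_nonneg x : 0 <= Re (inner x x).
Proof. destruct (Req_dec 0 0) as [_|]; [|lra].
  destruct (Classical_Prop.classic (x = zero)) as [->|n].
  rewrite i0l. simpl; lra. left; apply ipos; auto. Qed.
Lemma norm_sq x : norm x * norm x = Re (inner x x).
Proof. rewrite inorm. apply sqrt_sqrt, iRe_nonneg. Qed.
Lemma inner_self x : inner x x = RtoC (norm x * norm x).
Proof. rewrite norm_sq. apply Ceq. reflexivity. rewrite iIm. reflexivity. Qed.

Lemma cZ a : cscal a zero = zero.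
Proof. assert (Z : scal 0 (zero : V) = zero) by (apply (scal_zero_l (V:=NormedModule.ModuleSpace _ V))).
  transitivity (cscal a (scal 0 (zero:V))). { f_equal. symmetry. exact Z. }
  rewrite <- cR, cM. replace (Cmult a (RtoC 0)) with (RtoC 0) by Cring. rewrite cR. exact Z. Qed.
Lemma cO a x : cscal a (opp x) = opp (cscal a x).
Proof. rewrite <- sopo, <- cR, cM, <- (sopo (cscal a x)), <- cR, cM.
  f_equal. Cring. Qed.
Lemma cMi a x y : cscal a (minus x y) = minus (cscal a x) (cscal a y).
Proof. unfold minus. rewrite cP, cO. reflexivity. Qed.
Lemma cscal_comm a r x : cscal a (scal r x) = scal r (cscal a x).
Proof. rewrite <- !cR, !cM. f_equal. Cring. Qed.
Lemma cdecomp a x : cscal a x = plus (scal (Re a) x) (scal (Im a) (cscal Ci x)).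
Proof. rewrite <- !cR, cM, <- cD. f_equal. Cring. Qed.
Lemma norm_ci x : norm (cscal Ci x) = norm x.
Proof. rewrite !inorm, iS, iSr, Cmult_assoc. f_equal. csimpl. ring. Qed.

Definition pol (x y : V) : R := (norm (plus x y) * norm (plus x y) - norm (minus x y) * norm (minus x y)) / 4.
Lemma polar x y : inner x y = (pol x y, pol x (cscal Ci y)).
Proof. unfold pol. rewrite !norm_sq.
  unfold minus. rewrite !iP, !iPr, !iOl, !iOr, !iSr, !iS.
  rewrite (iC x y). destruct (inner x y) as [p q]. apply Ceq; csimpl; field. Qed.
End Alg.


Section Lims.
Context {T : Type} {F : (T -> Prop) -> Prop} {FF : Filter F}.

Lemma lim_plusV {W : NormedModule R_AbsRing} (f g : T -> W) a b :
  filterlim f F (locally a) -> filterlim g F (locally b) ->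
  filterlim (fun p => plus (f p) (g p)) F (locally (plus a b)).
Proof. intros. eapply filterlim_comp_2; eauto. apply filterlim_plus. Qed.
Lemma lim_oppV {W : NormedModule R_AbsRing} (f : T -> W) a :
  filterlim f F (locally a) -> filterlim (fun p => opp (f p)) F (locally (opp a)).
Proof. intros. eapply filterlim_comp; eauto. apply filterlim_opp. Qed.
Lemma lim_minusV {W : NormedModule R_AbsRing} (f g : T -> W) a b :
  filterlim f F (locally a) -> filterlim g F (locally b) ->
  filterlim (fun p => minus (f p) (g p)) F (locally (minus a b)).
Proof. intros. unfold minus. apply lim_plusV; auto. apply lim_oppV; auto. Qed.
Lemma lim_scalV {W : NormedModule R_AbsRing} (k : T -> R) (f : T -> W) c a :
  filterlim k F (locally c) -> filterlim f F (locally a) ->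
  filterlim (fun p => scal (k p) (f p)) F (locally (scal c a)).
Proof. intros. eapply filterlim_comp_2; eauto. apply (filterlim_scal (K:=R_AbsRing) (V:=W)). Qed.
Lemma lim_normV {W : NormedModule R_AbsRing} (f : T -> W) a :
  filterlim f F (locally a) -> filterlim (fun p => norm (f p)) F (locally (norm a)).
Proof. intros. eapply filterlim_comp; eauto. apply filterlim_norm. Qed.
Lemma lim_Rmult (f g : T -> R) a b :
  filterlim f F (locally a) -> filterlim g F (locally b) ->
  filterlim (fun p => f p * g p) F (locally (a * b)).
Proof. intros. eapply filterlim_comp_2; eauto. apply (filterlim_mult (K:=R_AbsRing)). Qed.
Lemma lim_Rplus (f g : T -> R) a b :
  filterlim f F (locally a) -> filterlim g F (locally b) ->
  filterlim (fun p => f p + g p) F (locally (a + b)).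
Proof. intros. apply (lim_plusV (W:=R_NormedModule)); auto. Qed.
Lemma lim_Ropp (f : T -> R) a :
  filterlim f F (locally a) -> filterlim (fun p => - f p) F (locally (- a)).
Proof. intros. apply (lim_oppV (W:=R_NormedModule)); auto. Qed.
Lemma lim_Rminus (f g : T -> R) a b :
  filterlim f F (locally a) -> filterlim g F (locally b) ->
  filterlim (fun p => f p - g p) F (locally (a - b)).
Proof. intros. apply lim_Rplus; auto. apply lim_Ropp; auto. Qed.
Lemma lim_const {W : UniformSpace} (c : W) : filterlim (fun _ : T => c) F (locally c).
Proof. apply filterlim_const. Qed.

Lemma lim_C (f : T -> C) (a : C) :
  filterlim (fun p => Re (f p)) F (locally (Re a)) ->
  filterlim (fun p => Im (f p)) F (locally (Im a)) ->
  filterlim f F (locally a).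
Proof. intros H1 H2. apply filterlim_locally. intros eps.
  apply filterlim_locally with (eps := eps) in H1.
  apply filterlim_locally with (eps := eps) in H2.
  generalize (filter_and _ _ H1 H2). apply filter_imp. intros p [A B]. split; auto. Qed.
Lemma lim_Re (f : T -> C) (a : C) :
  filterlim f F (locally a) -> filterlim (fun p => Re (f p)) F (locally (Re a)).
Proof. intros H1. apply filterlim_locally. intros eps.
  apply filterlim_locally with (eps := eps) in H1. revert H1.
  apply filter_imp. intros p [A B]. exact A. Qed.
Lemma lim_Im (f : T -> C) (a : C) :
  filterlim f F (locally a) -> filterlim (fun p => Im (f p)) F (locally (Im a)).
Proof. intros H1. apply filterlim_locally. intros eps.
  apply filterlim_locally with (eps := eps) in H1. revert H1.
  apply filter_imp. intros p [A B]. exact B. Qed.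
Lemma lim_Cmult (f g : T -> C) a b :
  filterlim f F (locally a) -> filterlim g F (locally b) ->
  filterlim (fun p => Cmult (f p) (g p)) F (locally (Cmult a b)).
Proof. intros A B. apply lim_C; simpl.
  apply lim_Rminus; apply lim_Rmult; auto using lim_Re, lim_Im.
  apply lim_Rplus; apply lim_Rmult; auto using lim_Re, lim_Im. Qed.
Lemma lim_Cplus (f g : T -> C) a b :
  filterlim f F (locally a) -> filterlim g F (locally b) ->
  filterlim (fun p => Cplus (f p) (g p)) F (locally (Cplus a b)).
Proof. intros A B. apply lim_C; simpl; apply lim_Rplus; auto using lim_Re, lim_Im. Qed.
Lemma lim_Cconj (f : T -> C) a :
  filterlim f F (locally a) -> filterlim (fun p => Cconj (f p)) F (locally (Cconj a)).
Proof. intros A. apply lim_C; simpl; auto using lim_Re, lim_Im. apply lim_Ropp; auto using lim_Im. Qed.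

Lemma lim_bounded_additive {W W' : NormedModule R_AbsRing} (L : W -> W') M (f : T -> W) a :
  (forall x y, L (plus x y) = plus (L x) (L y)) ->
  (forall x, norm (L x) <= M * norm x) ->
  filterlim f F (locally a) -> filterlim (fun p => L (f p)) F (locally (L a)).
Proof. intros Ha Hb Hf.
  assert (L0 : L zero = zero).
  { apply (plus_reg_l (G:=NormedModule.AbelianGroup _ W') (L zero)).
    rewrite <- Ha. rewrite !plus_zero_r. reflexivity. }
  assert (LO : forall x, L (opp x) = opp (L x)).
  { intros x. apply (plus_reg_l (G:=NormedModule.AbelianGroup _ W') (L x)).
    rewrite <- Ha. rewrite (plus_opp_r (G:=NormedModule.AbelianGroup _ W)).
    rewrite (plus_opp_r (G:=NormedModule.AbelianGroup _ W')). exact L0. }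
  apply (filterlim_locally_ball_norm (K:=R_AbsRing)). intros eps.
  assert (Hpos : 0 < eps / (Rabs M + 1)).
  { apply Rdiv_lt_0_compat. apply cond_pos. generalize (Rabs_pos M); lra. }
  apply (filterlim_locally_ball_norm (K:=R_AbsRing)) with (eps := mkposreal _ Hpos) in Hf.
  revert Hf. apply filter_imp. intros p Hp. unfold ball_norm in *. simpl in Hp.
  unfold minus. rewrite <- LO, <- Ha.
  eapply Rle_lt_trans. apply Hb.
  assert (N0 := norm_ge_0 (plus (f p) (opp a))).
  apply Rle_lt_trans with (Rabs M * norm (plus (f p) (opp a))).
  apply Rmult_le_compat_r; auto. apply Rle_abs.
  apply Rle_lt_trans with (Rabs M * (eps / (Rabs M + 1))).
  apply Rmult_le_compat_l. apply Rabs_pos. left; exact Hp.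
  assert (Rabs M * (eps / (Rabs M + 1)) = eps * (Rabs M / (Rabs M + 1))) by (field; generalize (Rabs_pos M); lra).
  rewrite H. assert (Rabs M / (Rabs M + 1) < 1).
  { assert (0 <= Rabs M) by apply Rabs_pos.
    replace (Rabs M / (Rabs M + 1)) with (1 - 1/(Rabs M + 1)) by (field; lra).
    assert (0 < 1 / (Rabs M + 1)) by (apply Rdiv_lt_0_compat; lra). lra. }
  assert (0 < eps) by apply cond_pos. nra. Qed.
End Lims.

Section LimH.
Context {T : Type} {F : (T -> Prop) -> Prop} {FF : Filter F}.
Context {V : NormedModule R_AbsRing} (cscal : C -> V -> V) (inner : V -> V -> C) (Hh : hilb cscal inner).

Lemma lim_ci (f : T -> V) a : filterlim f F (locally a) ->
  filterlim (fun p => cscal Ci (f p)) F (locally (cscal Ci a)).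
Proof. intros. apply (lim_bounded_additive (cscal Ci) 1); auto.
  intros; apply (cP _ _ Hh). intros; rewrite (norm_ci _ _ Hh). lra. Qed.

Lemma lim_pol (f g : T -> V) a b : filterlim f F (locally a) -> filterlim g F (locally b) ->
  filterlim (fun p => pol (f p) (g p)) F (locally (pol a b)).
Proof. intros A B. unfold pol, Rdiv. apply lim_Rmult; [|apply lim_const].
  apply lim_Rminus; apply lim_Rmult; apply lim_normV; first [apply lim_plusV | apply lim_minusV]; auto; apply lim_oppV; auto. Qed.

Lemma lim_inner (f g : T -> V) a b : filterlim f F (locally a) -> filterlim g F (locally b) ->
  filterlim (fun p => inner (f p) (g p)) F (locally (inner a b)).
Proof. intros A B. rewrite (polar _ _ Hh).
  apply filterlim_ext with (fun p => (pol (f p) (g p), pol (f p) (cscal Ci (g p)))).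
  intros; rewrite (polar _ _ Hh); reflexivity.
  apply lim_C; simpl. apply lim_pol; auto. apply lim_pol; auto. apply lim_ci; auto. Qed.

Lemma lim_cscal (k : T -> C) (f : T -> V) c a : filterlim k F (locally c) -> filterlim f F (locally a) ->
  filterlim (fun p => cscal (k p) (f p)) F (locally (cscal c a)).
Proof. intros A B. rewrite (cdecomp _ _ Hh).
  apply filterlim_ext with (fun p => plus (scal (Re (k p)) (f p)) (scal (Im (k p)) (cscal Ci (f p)))).
  intros; symmetry; apply (cdecomp _ _ Hh).
  apply lim_plusV; apply lim_scalV; auto using lim_Re, lim_Im, lim_ci. Qed.
End LimH.


Section Mod.
Context {W : NormedModule R_AbsRing}.
Lemma sc_minus (k : R) (u v : W) : scal k (minus u v) = minus (scal k u) (scal k v).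
Proof. unfold minus. rewrite (scal_distr_l (V:=NormedModule.ModuleSpace _ W)).
  rewrite (scal_opp_r (V:=NormedModule.ModuleSpace _ W)). reflexivity. Qed.
Lemma sc_assoc (a b : R) (u : W) : scal a (scal b u) = scal (a * b) u.
Proof. apply (scal_assoc (V:=NormedModule.ModuleSpace _ W)). Qed.
Lemma sc_one (u : W) : scal 1 u = u.
Proof. apply (scal_one (V:=NormedModule.ModuleSpace _ W)). Qed.
Lemma sc_zero_l (u : W) : scal 0 u = zero.
Proof. apply (scal_zero_l (V:=NormedModule.ModuleSpace _ W)). Qed.
Lemma sc_zero_r (k : R) : scal k (zero : W) = zero.
Proof. apply (scal_zero_r (V:=NormedModule.ModuleSpace _ W)). Qed.
Lemma mi_self (u : W) : minus u u = zero.
Proof. apply (minus_eq_zero (G:=NormedModule.AbelianGroup _ W)). Qed.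
Lemma mi_zero_r (u : W) : minus u zero = u.
Proof. unfold minus. rewrite (opp_zero (G:=NormedModule.AbelianGroup _ W)). apply plus_zero_r. Qed.
Lemma nrm_zero : norm (zero : W) = 0.
Proof. apply (norm_zero (V:=W)). Qed.
Lemma sopo' (u : W) : scal (-1) u = opp u.
Proof. rewrite <- (scal_opp_one (V:=NormedModule.ModuleSpace _ W)). f_equal. Qed.
Lemma mz_opp (u : W) : minus zero (opp u) = u.
Proof. unfold minus. rewrite plus_zero_l. apply (opp_opp (G:=NormedModule.AbelianGroup _ W)). Qed.
Lemma nrm_eq0 (u : W) : u = zero -> norm u = 0.
Proof. intros ->. apply nrm_zero. Qed.
Lemma nrm_scal (k : R) (u : W) : norm (scal k u) <= Rabs k * norm u.
Proof. apply (norm_scal (V:=W)). Qed.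
End Mod.

Lemma scal_inv_bound {W : NormedModule R_AbsRing} (h : R) (X : W) e : h <> 0 -> norm (scal (/h) X) < e -> norm X <= e * Rabs h.
Proof. intros hne Hd. assert (E : X = scal h (scal (/h) X)) by (rewrite sc_assoc, Rinv_r, sc_one; auto).
  rewrite E. eapply Rle_trans. apply nrm_scal. rewrite Rmult_comm. apply Rmult_le_compat_r. apply Rabs_pos.
  left. exact Hd. Qed.

Definition DQ {W : NormedModule R_AbsRing} (f : R -> W) (x : R) (l : W) :=
  filterlim (fun h => scal (/h) (minus (f (x+h)) (f x))) (locally' 0) (locally l).

Lemma minusR (a b : R) : minus a b = a - b.
Proof. reflexivity. Qed.
Lemma ballR (x d y : R) : ball x d y <-> Rabs (y - x) < d.
Proof. split; intro H; exact H. Qed.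

Lemma DQ_key {W : NormedModule R_AbsRing} (h : R) (D l : W) : h <> 0 ->
  @minus (NormedModule.AbelianGroup _ W) (scal (/h) D) l = scal (/h) (minus D (scal h l)).
Proof. intros. rewrite sc_minus, sc_assoc. rewrite Rinv_l by auto. rewrite sc_one. reflexivity. Qed.

Lemma DQ_of_derive {W : NormedModule R_AbsRing} (f : R -> W) x l :
  is_derive f x l -> DQ f x l.
Proof. intros [_ Hd]. specialize (Hd x (fun P HP => HP)).
  apply (filterlim_locally_ball_norm (K:=R_AbsRing)). intros eps.
  assert (e2 : 0 < eps / 2) by (generalize (cond_pos eps); lra).
  destruct (Hd (mkposreal _ e2)) as [d Hd']. simpl in Hd'.
  exists d. intros h Hb hne. change R in h. apply ballR in Hb.
  assert (B : ball x d (x + h)) by (apply ballR; replace (x + h - x) with (h - 0) by ring; exact Hb).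
  specialize (Hd' _ B).
  unfold ball_norm. rewrite DQ_key by auto.
  rewrite minusR in Hd'. replace (x + h - x) with h in Hd' by ring.
  eapply Rle_lt_trans. apply nrm_scal.
  assert (Hn : forall r : R, @norm R_AbsRing (AbsRing_NormedModule R_AbsRing) r = Rabs r) by reflexivity. rewrite Hn in Hd'.
  assert (Rabs h > 0) by (apply Rabs_pos_lt; auto).
  rewrite Rabs_inv.
  apply Rle_lt_trans with (/ Rabs h * (eps / 2 * Rabs h)).
  apply Rmult_le_compat_l. left; apply Rinv_0_lt_compat; auto. exact Hd'.
  replace (/ Rabs h * (eps / 2 * Rabs h)) with (eps / 2) by (field; lra).
  generalize (cond_pos eps); lra. Qed.

Lemma derive_of_DQ {W : NormedModule R_AbsRing} (f : R -> W) x l :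
  DQ f x l -> is_derive f x l.
Proof. intros Hq. split. apply is_linear_scal_l.
  intros xq Hx. apply (is_filter_lim_locally_unique (K:=R_AbsRing) (V:=AbsRing_NormedModule R_AbsRing)) in Hx. subst xq.
  intros eps. apply (filterlim_locally_ball_norm (K:=R_AbsRing)) with (eps := eps) in Hq.
  destruct Hq as [d Hd]. exists d. intros y Hy. change R in y.
  destruct (Req_dec y x) as [->|ne].
  - rewrite minusR, Rminus_diag.
    rewrite sc_zero_l, mi_self. apply Rle_trans with 0.
    apply Req_le, nrm_eq0, mi_zero_r.
    apply Rmult_le_pos; [left; apply cond_pos | apply norm_ge_0].
  - set (h := y - x). assert (hne : h <> 0) by (unfold h; lra).
    assert (Bh : ball 0 d h) by (apply ballR in Hy; apply ballR; unfold h; replace (y - x - 0) with (y - x) by ring; exact Hy).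
    specialize (Hd h Bh hne). unfold ball_norm in Hd.
    replace (x + h) with y in Hd by (unfold h; ring).
    rewrite minusR. fold h.
    rewrite DQ_key in Hd by auto.
    eapply Rle_trans. apply (scal_inv_bound h _ eps hne Hd). apply Req_le. reflexivity. Qed.


Lemma DQ_eq {W : NormedModule R_AbsRing} (f : R -> W) x l l' : DQ f x l -> l = l' -> DQ f x l'.
Proof. intros H ->; exact H. Qed.

Lemma lim_eq_target {T : Type} {U : UniformSpace} (g : T -> U) F a b :
  filterlim g F (locally a) -> a = b -> filterlim g F (locally b).
Proof. intros H <-; exact H. Qed.

Lemma lim_shift (x : R) : filterlim (fun h => x + h) (locally' 0) (locally x).
Proof. eapply lim_eq_target. 2: apply Rplus_0_r.
  apply lim_Rplus. apply filterlim_const. intros P HP. unfold filtermap, locally', within. revert HP. apply filter_imp. auto. Qed.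

Lemma DQ_cont {W : NormedModule R_AbsRing} (f : R -> W) x l :
  DQ f x l -> filterlim (fun h => f (x + h)) (locally' 0) (locally (f x)).
Proof. intros Hd. apply derive_of_DQ in Hd.
  assert (Hc : continuous f x) by (apply ex_derive_continuous; exists l; exact Hd).
  apply (filterlim_comp _ _ _ (fun h => x + h) f _ (locally x)). apply lim_shift. exact Hc. Qed.

Lemma DQ_lin {W W' : NormedModule R_AbsRing} (L : W -> W') M (f : R -> W) x l :
  (forall a b, L (plus a b) = plus (L a) (L b)) ->
  (forall r a, L (scal r a) = scal r (L a)) ->
  (forall a, norm (L a) <= M * norm a) ->
  DQ f x l -> DQ (fun s => L (f s)) x (L l).
Proof. intros Ha Hs Hb Hd. unfold DQ.
  assert (LO : forall a, L (opp a) = opp (L a)).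
  { intros a. rewrite <- (sopo' (W:=W) a), Hs. apply sopo'. }
  apply filterlim_ext with (fun h => L (scal (/h) (minus (f (x + h)) (f x)))).
  { intros h. rewrite Hs. unfold minus. rewrite Ha, LO. reflexivity. }
  apply (lim_bounded_additive L M); auto. Qed.

Lemma minusC (a b : C) : minus a b = Cminus a b.
Proof. reflexivity. Qed.

Section DQH.
Context {V : NormedModule R_AbsRing} (cscal : C -> V -> V) (inner : V -> V -> C) (Hh : hilb cscal inner).

Lemma DQ_inner (f g : R -> V) x lf lg : DQ f x lf -> DQ g x lg ->
  DQ (W:=C_R_NormedModule) (fun s => inner (f s) (g s)) x (Cplus (inner lf (g x)) (inner (f x) lg)).
Proof. intros Hf Hg. unfold DQ.
  apply filterlim_ext with (fun h => Cplus (inner (scal (/h) (minus (f (x + h)) (f x))) (g (x + h)))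
                                          (inner (f x) (scal (/h) (minus (g (x + h)) (g x))))).
  { intros h. rewrite (iscal_l _ _ Hh), (iscal_r _ _ Hh), (iMl _ _ Hh), (iMr _ _ Hh).
    rewrite scal_R_Cmult. apply Ceq; csimpl; unfold plus, opp; simpl; ring. }
  apply lim_Cplus. apply (lim_inner _ _ Hh). exact Hf. apply DQ_cont with lg; exact Hg.
  apply (lim_inner _ _ Hh). apply filterlim_const. exact Hg. Qed.
End DQH.

Section LinOps.
Context {V : NormedModule R_AbsRing} (cscal : C -> V -> V) (inner : V -> V -> C) (Hh : hilb cscal inner).
Context (L : V -> V) (La : forall x y, L (plus x y) = plus (L x) (L y)) (Lc : forall a x, L (cscal a x) = cscal a (L x)).
Lemma lin_scal r x : L (scal r x) = scal r (L x).
Proof. rewrite <- !(cR _ _ Hh). apply Lc. Qed.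
Lemma lin_zero : L zero = zero.
Proof. transitivity (L (scal 0 (zero:V))). apply f_equal. symmetry. apply sc_zero_l. rewrite lin_scal. apply sc_zero_l. Qed.
Lemma lin_opp x : L (opp x) = opp (L x).
Proof. rewrite <- (sopo' (W:=V) x), lin_scal. apply sopo'. Qed.
Lemma lin_minus x y : L (minus x y) = minus (L x) (L y).
Proof. unfold minus. rewrite La, lin_opp. reflexivity. Qed.
End LinOps.

Lemma Cdiv_cancel (A N : C) : N <> RtoC 0 -> Cmult (Cdiv A N) N = A.
Proof. intros. unfold Cdiv. rewrite <- Cmult_assoc, (Cinv_l N) by auto. apply Cmult_1_r. Qed.
Lemma Cfield1 (A N X : C) : N <> RtoC 0 -> Cplus (Cmult (Copp (Cdiv A N)) N) X = Cminus X A.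
Proof. intros. replace (Cmult (Copp (Cdiv A N)) N) with (Copp (Cmult (Cdiv A N) N)) by Cring.
  rewrite Cdiv_cancel by auto. Cring. Qed.


Lemma is_derive_eq {K : AbsRing} {W : NormedModule K} (f : K -> W) x l l' :
  is_derive f x l -> l = l' -> is_derive f x l'.
Proof. intros H ->; exact H. Qed.

Lemma ode_zero (f : R -> C) (c : R -> C) (t : R) :
  (forall s, DQ (W:=C_R_NormedModule) f s (Cmult (c s) (f s))) ->
  (forall s, continuous (fun r => Re (c r)) s) ->
  f t = RtoC 0 -> forall s, f s = RtoC 0.
Proof.
  intros Hd Hc Ht s.
  set (p := fun r => Re (f r)). set (q := fun r => Im (f r)). set (cr := fun r => Re (c r)).
  assert (Dp : forall r, is_derive p r (cr r * p r - Im (c r) * q r)).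
  { intros r. apply (derive_of_DQ (W:=R_NormedModule)). unfold DQ. exact (lim_Re _ _ (Hd r)). }
  assert (Dq : forall r, is_derive q r (cr r * q r + Im (c r) * p r)).
  { intros r. apply (derive_of_DQ (W:=R_NormedModule)). unfold DQ. exact (lim_Im _ _ (Hd r)). }
  assert (Ex : forall b, ex_RInt cr t b).
  { intros b. apply (ex_RInt_continuous (V:=R_CompleteNormedModule)). intros; apply Hc. }
  set (G := fun r => RInt cr t r).
  assert (DG : forall r, is_derive G r (cr r)).
  { intros r. apply (is_derive_RInt (V:=R_NormedModule) cr G t r). apply filter_forall. intros; apply (RInt_correct (V:=R_CompleteNormedModule)); apply Ex. apply Hc. }
  set (psi := fun r => (p r * p r + q r * q r) * exp (-2 * G r)).
  assert (Rc : forall n m : R_AbsRing, mult n m = mult m n) by (intros; apply Rmult_comm).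
  assert (Dpsi : forall r, is_derive psi r 0).
  { intros r.
    assert (D1 : is_derive (fun r => p r * p r + q r * q r) r (2 * cr r * (p r * p r + q r * q r))).
    { assert (A1 := is_derive_plus _ _ r _ _ (is_derive_mult p p r _ _ (Dp r) (Dp r) Rc) (is_derive_mult q q r _ _ (Dq r) (Dq r) Rc)).
      eapply is_derive_eq. exact A1. unfold plus, mult; simpl. ring. }
    assert (D2 : is_derive (fun r => exp (-2 * G r)) r (exp (-2 * G r) * (-2 * cr r))).
    { assert (A2 := is_derive_comp exp (fun r => -2 * G r) r _ _ (is_derive_exp _) (is_derive_scal G r (-2) _ (DG r))).
      eapply is_derive_eq. exact A2. unfold scal; simpl; unfold mult; simpl. ring. }
    assert (A3 := is_derive_mult _ _ r _ _ D1 D2 Rc).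
    eapply is_derive_eq. exact A3. unfold plus, mult; simpl. ring. }
  assert (E : psi s = psi t).
  { destruct (Rtotal_order s t) as [lt|[eq|gt]].
    - apply (eq_is_derive (V:=R_NormedModule)); auto.
    - subst; reflexivity.
    - symmetry; apply (eq_is_derive (V:=R_NormedModule)); auto. }
  assert (Pt : psi t = 0). { unfold psi, p, q. rewrite Ht. simpl. ring. }
  rewrite Pt in E. unfold psi in E.
  assert (0 < exp (-2 * G s)) by apply exp_pos.
  assert (S0 : p s * p s + q s * q s = 0).
  { apply Rmult_integral in E. destruct E; auto. lra. }
  assert (p s = 0) by nra. assert (q s = 0) by nra.
  apply Ceq; auto. Qed.


Lemma is_RInt_lin {W W' : NormedModule R_AbsRing} (L : W -> W') (f : R -> W) a b I :
  (forall x y, L (plus x y) = plus (L x) (L y)) ->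
  (forall r x, L (scal r x) = scal r (L x)) ->
  filterlim L (locally I) (locally (L I)) ->
  is_RInt f a b I -> is_RInt (fun r => L (f r)) a b (L I).
Proof. intros Ha Hs Hb Hi.
  assert (L0 : L zero = zero).
  { transitivity (L (scal 0 (zero:W))). apply f_equal. symmetry. apply sc_zero_l. rewrite Hs. apply sc_zero_l. }
  assert (RS : forall ptd, L (Riemann_sum f ptd) = Riemann_sum (fun r => L (f r)) ptd).
  { assert (aux : forall (l : list (R * R)) (x0 : R * R),
      L (seq.foldr plus zero (seq.pairmap (fun x y => scal (fst y - fst x) (f (snd y))) x0 l)) =
      seq.foldr plus zero (seq.pairmap (fun x y => scal (fst y - fst x) (L (f (snd y)))) x0 l)).
    { induction l as [|y l IH]; intros x0.
      - simpl. exact L0.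
      - simpl. rewrite Ha, Hs, IH. reflexivity. }
    intros ptd. unfold Riemann_sum. apply aux. }
  unfold is_RInt in *.
  apply filterlim_ext with (fun ptd => L (scal (sign (b - a)) (Riemann_sum f ptd))).
  { intros ptd. rewrite Hs, RS. reflexivity. }
  apply (filterlim_comp _ _ _ (fun ptd => scal (sign (b - a)) (Riemann_sum f ptd)) L _ (locally I)).
  exact Hi.
  exact Hb. Qed.


Theorem corollary6
  (H : CompleteNormedModule R_AbsRing) (cscal : C -> H -> H)
  (inner : H -> H -> C) (U : R -> R -> H -> H)
  (t0 : R) (z : H) (Lz : R -> H) (K : R -> R -> C) :
  is_complex_hilbert cscal inner ->
  is_propagator cscal U ->
  (forall t : R, is_gen U t z (Lz t)) ->
  z <> zero ->
  (forall t : R, continuous (fun t' : R => U t' t0 (Lz t')) t) ->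
  (forall t s : R, continuous (fun s' : R => K t s') s) ->
  (forall t s : R,
      K t s =
      Cplus
        (Copp (Cdiv (ipt inner U t0 s (U t s (Qt cscal inner U t0 z t (Lz t)))
                                      (Qt cscal inner U t0 z s (Lz s)))
                    (ipt inner U t0 s z z)))
        (RInt (V := C_R_CompleteNormedModule)
           (fun r : R =>
              Cmult (K t r)
                (Cdiv (ipt inner U t0 s (U r s z) (Qt cscal inner U t0 z s (Lz s)))
                      (ipt inner U t0 s z z)))
           s t)) ->
  let eta := fun t s : R =>
    minus (U t s (Qt cscal inner U t0 z t (Lz t)))
          (RInt (V := H) (fun r : R => cscal (K t r) (U r s z)) s t) in
  forall t s : R,
    ipt inner U t0 s (eta t s) z = RtoC 0 /\
    K t s = Copp (Cdiv (inner (eta t t0) (eta s t0)) (ipt inner U t0 s z z)).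
Proof.
  intros Hh0 HU Hgen Hz HLc HKc HK eta.
  set (Hn := CompleteNormedModule.NormedModule R_AbsRing H).
  assert (Hh : hilb (H:=Hn) cscal inner) by exact (to_hilb _ _ Hh0).
  destruct HU as (Hbl & Hcont & Hid & Hcomp).
  assert (Uadd : forall a b (x y : Hn), U a b (plus x y) = plus (U a b x) (U a b y)) by (intros; apply (Hbl a b)).
  assert (Ucs : forall a b c (x : Hn), U a b (cscal c x) = cscal c (U a b x)) by (intros; apply (Hbl a b)).
  assert (Usc : forall a b r (x : Hn), U a b (scal r x) = scal r (U a b x)) by (intros; apply (lin_scal _ _ Hh); auto).
  assert (Umi : forall a b (x y : Hn), U a b (minus x y) = minus (U a b x) (U a b y)) by (intros; apply (lin_minus _ _ Hh); auto).
  assert (U0 : forall a b, U a b (zero : Hn) = zero) by (intros; apply (lin_zero _ _ Hh); auto).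
  assert (Ulim : forall a b {T : Type} (F : (T -> Prop) -> Prop) {FF : Filter F} (g : T -> Hn) x,
             filterlim g F (locally x) -> filterlim (fun p => U a b (g p)) F (locally (U a b x))).
  { intros a b T F FF g x Hg. destruct (Hbl a b) as (_ & _ & [M HM]).
    apply (lim_bounded_additive (W:=Hn) (W':=Hn) (U a b) M); auto. }
  pose (zf := fun r => U r t0 z).
  pose (bf := fun r => U r t0 (Lz r)).
  pose (Nf := fun r => inner (zf r) (zf r)).
  pose (af := fun r => U r t0 (Qt cscal inner U t0 z r (Lz r))).
  pose (cf := fun r => Cdiv (inner (bf r) (zf r)) (Nf r)).
  pose (kf := fun t r => cscal (K t r) (zf r)).
  pose (E := fun t sg => U sg t0 (eta t sg)).
  assert (Fcomp : forall a r x, U a t0 (U r a x) = U r t0 x) by (intros; apply Hcomp).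
  assert (FzNZ : forall r, zf r <> zero).
  { intros r Hr. apply Hz. rewrite <- (Hid r z), <- (Hcomp t0 r r z). unfold zf in Hr. rewrite Hr. apply U0. }
  assert (FNpos : forall r, 0 < Re (Nf r)) by (intros; apply (ipos _ _ Hh); apply FzNZ).
  assert (FNim : forall r, Im (Nf r) = 0) by (intros; apply (iIm _ _ Hh)).
  assert (FNnz : forall r, Nf r <> RtoC 0).
  { intros r E0. specialize (FNpos r). rewrite E0 in FNpos. simpl in FNpos. lra. }
  assert (Fzc : forall r, continuous zf r).
  { intros r. apply (continuous_comp_2 (fun x => x) (fun _ => t0) (fun a b => U a b z)).
    apply continuous_id. apply continuous_const. apply Hcont. }
  assert (Fkc : forall t r, continuous (kf t) r).
  { intros t r. apply (lim_cscal (V:=Hn) cscal inner Hh (fun r => K t r) zf). apply HKc. apply Fzc. }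
  assert (Fex : forall t a b, ex_RInt (kf t) a b).
  { intros t a b. apply (ex_RInt_continuous (V:=H)). intros; apply Fkc. }
  assert (Fa : forall r, af r = minus (bf r) (cscal (cf r) (zf r))).
  { intros r. unfold af, Qt, Pt. rewrite Umi, Ucs. reflexivity. }
  assert (FE : forall t sg, E t sg = minus (af t) (RInt (kf t) sg t)).
  { intros t sg. unfold E, eta. rewrite Umi, Fcomp. fold (af t). f_equal.
    set (g := fun r => cscal (K t r) (U r sg z)).
    assert (Hg : ex_RInt g sg t).
    { apply (ex_RInt_continuous (V:=H)). intros r _.
      apply (lim_cscal (V:=Hn) cscal inner Hh (fun r => K t r) (fun r => U r sg z)). apply HKc.
      apply (continuous_comp_2 (fun x => x) (fun _ => sg) (fun a b => U a b z)).
      apply continuous_id. apply continuous_const. apply Hcont. }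
    assert (HI := is_RInt_lin (W:=Hn) (W':=Hn) (U sg t0) g sg t (RInt g sg t) (Uadd _ _) (Usc _ _)
                    (Ulim _ _ _ _ _ (fun x => x) _ (filterlim_id _ _)) (RInt_correct _ _ _ Hg)).
    assert (Eg : (fun r => U sg t0 (g r)) = kf t).
    { apply functional_extensionality. intros r. unfold g, kf, zf. rewrite Ucs, Fcomp. reflexivity. }
    rewrite Eg in HI. symmetry. apply (is_RInt_unique (V:=H)). exact HI. }
  assert (FK : forall t s, K t s = Copp (Cdiv (inner (E t s) (af s)) (Nf s))).
  { intros t s. rewrite HK.
    set (L := fun v : Hn => Cdiv (inner v (af s)) (Nf s)).
    assert (La : forall x y : Hn, L (plus x y) = plus (L x) (L y)).
    { intros x y. unfold L. rewrite (iP _ _ Hh). apply Ceq; csimpl; unfold plus; simpl; ring. }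
    assert (Ls : forall r (x : Hn), L (scal r x) = scal r (L x)).
    { intros r x. unfold L. rewrite (iscal_l _ _ Hh), scal_R_Cmult. Cring. }
    assert (Lc : forall I, filterlim L (locally I) (locally (L I))).
    { intros I. unfold L, Cdiv. apply lim_Cmult; [|apply filterlim_const].
      apply (lim_inner _ _ Hh). apply filterlim_id. apply filterlim_const. }
    assert (HI := is_RInt_lin (W:=Hn) (W':=C_R_NormedModule) L (kf t) s t (RInt (kf t) s t) La Ls (Lc _)
                    (RInt_correct _ _ _ (Fex t s t))).
    assert (Eg : (fun r => L (kf t r)) = (fun r => Cmult (K t r) (Cdiv (ipt inner U t0 s (U r s z) (Qt cscal inner U t0 z s (Lz s))) (ipt inner U t0 s z z)))).
    { apply functional_extensionality. intros r. unfold L, kf, ipt, zf. rewrite Fcomp, (iS _ _ Hh). fold (af s). unfold Nf, zf. Cring. }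
    rewrite Eg in HI. rewrite (is_RInt_unique (V:=C_R_CompleteNormedModule) _ _ _ _ HI). unfold L, ipt. rewrite Fcomp. fold (af s) (af t) (zf s).
    rewrite FE, (iMl _ _ Hh). unfold Nf. Cring. }
  assert (FDz : forall sg, DQ zf sg (bf sg)).
  { intros sg. unfold DQ. assert (G := Ulim sg t0 _ _ _ _ _ (Hgen sg)).
    eapply filterlim_ext. 2: exact G. intros h. simpl. rewrite Usc, Umi, Fcomp. reflexivity. }
  assert (FDE : forall t sg, DQ (E t) sg (kf t sg)).
  { intros t sg.
    assert (EE : E t = (fun x => minus (af t) (RInt (kf t) x t))) by (apply functional_extensionality; apply FE).
    rewrite EE.
    assert (D1 := is_derive_RInt' (V:=Hn) (kf t) (fun a => RInt (kf t) a t) sg t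
                    (filter_forall _ (fun a => RInt_correct _ _ _ (Fex t a t))) (Fkc t sg)).
    assert (D2 := is_derive_minus (K:=R_AbsRing) (V:=Hn) (fun _ => af t) (fun a => RInt (kf t) a t) sg _ _
                    (is_derive_const _ _) D1).
    apply DQ_of_derive in D2. eapply DQ_eq. exact D2. apply mz_opp. }
  assert (Ff : forall t sg, inner (E t sg) (zf sg) = RtoC 0).
  { intros t. apply (ode_zero (fun sg => inner (E t sg) (zf sg)) (fun r => Cconj (cf r)) t).
    - intros sg. eapply DQ_eq. apply (DQ_inner _ _ Hh); [apply FDE | apply FDz].
      unfold kf. rewrite (iS _ _ Hh), (FK t sg), (Fa sg), (iMr _ _ Hh), (iSr _ _ Hh).
      fold (Nf sg). rewrite Cfield1 by apply FNnz. Cring.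
    - intros s0.
      assert (Eq : forall r, Re (Cconj (cf r)) = Re (inner (bf r) (zf r)) * / Re (Nf r)).
      { intros r. unfold cf. generalize (FNim r) (FNpos r). generalize (Nf r) (inner (bf r) (zf r)).
        intros [n1 n2] [p1 p2]. simpl. intros -> Hp. field. lra. }
      unfold continuous. eapply lim_eq_target. 2: symmetry; apply Eq.
      apply filterlim_ext with (fun r => Re (inner (bf r) (zf r)) * / Re (Nf r)). intros; symmetry; apply Eq.
      apply lim_Rmult.
      + apply lim_Re. apply (lim_inner _ _ Hh). apply HLc. apply Fzc.
      + apply (continuous_Rinv_comp (fun r => Re (Nf r))).
        apply lim_Re. apply (lim_inner _ _ Hh); apply Fzc.
        specialize (FNpos s0). lra.
    - replace (E t t) with (af t).
      rewrite (Fa t), (iMl _ _ Hh), (iS _ _ Hh). fold (Nf t). unfold cf. rewrite Cdiv_cancel by apply FNnz. Cring.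
      rewrite FE. rewrite (RInt_point (V:=H)). symmetry. apply (mi_zero_r (W:=Hn)). }
  intros t s. split.
  - exact (Ff t s).
  - assert (EI : forall u, E u u = af u).
    { intros u. rewrite FE, (RInt_point (V:=H)). apply (mi_zero_r (W:=Hn)). }
    assert (E0 : forall u, E u t0 = eta u t0) by (intros; unfold E; apply Hid).
    set (g := fun sg => inner (E t sg) (E s sg)).
    assert (Dg : forall sg, is_derive (V:=C_R_NormedModule) g sg (RtoC 0)).
    { intros sg. apply derive_of_DQ. eapply DQ_eq. apply (DQ_inner _ _ Hh); apply FDE.
      unfold kf. rewrite (iS _ _ Hh), (iSr _ _ Hh), (iC _ _ Hh (E s sg) (zf sg)), !Ff. Cring. }
    assert (Dg0 : forall x, is_derive (V:=C_R_NormedModule) g x zero) by (intros x; exact (Dg x)).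
    assert (Gs : g s = g t0).
    { destruct (Rtotal_order s t0) as [Hlt|[Heq|Hgt]].
      - exact (eq_is_derive (V:=C_R_NormedModule) g s t0 (fun x _ => Dg0 x) Hlt).
      - rewrite Heq; reflexivity.
      - symmetry. exact (eq_is_derive (V:=C_R_NormedModule) g t0 s (fun x _ => Dg0 x) Hgt). }
    unfold g in Gs. rewrite EI, !E0 in Gs.
    rewrite (FK t s), Gs. reflexivity.
Qed.
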